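(* Let $\mathcal{A}$ be a strong $T_0$-family. Then for every uncountable pairwise disjoint family $\mathcal{F}$ of finite subsets of $\omega_1$ there are distinct $A,B\in\mathcal{F}$ such that $(A\otimes B)\cap\mathcal{A}=\emptyset$, and there are distinct $A,B\in\mathcal{F}$ such that $A\otimes B\subseteq\mathcal{A}$. Moreover, every finite set $C\subseteq\omega_1$ such that $[C]^2\subseteq\mathcal{A}$ is itself an element of $\mathcal{A}$.
   Context: For disjoint sets $A,B$, $A\otimes B=\{\{\alpha,\beta\}:\alpha\in A,\beta\in B\}$; $[X]^n$ is the family of $n$-element subsets of $X$ and $[X]^{<\omega}$ the family of finite subsets. A function $c=(c_0,c_1):[\omega_1]^2\to I\times J$ with $0,1\in I$, $J\ne\emptyset$, is a $T$-coloring if for every uncountable pairwise disjoint family $\{\{a_\xi(0),a_\xi(1)\}:\xi<\omega_1\}$ of pairs of $\omega_1$ and all $(i_0,j_0),(i_1,j_1)\in I\times J$ there are $\xi<\eta<\omega_1$ with $c(\{a_\xi(0),a_\eta(0)\})=(i_0,j_0)$ and $c(\{a_\xi(1),a_\eta(1)\})=(i_1,j_1)$. It is a strong $T$-coloring if moreover for every uncountable pairwise disjoint family $\{A_\xi:\xi<\omega_1\}$ of finite subsets of $\omega_1$ there are $\xi<\eta$ with $c_0[A_\xi\otimes A_\eta]=\{0\}$ and there are $\xi<\eta$ with $c_0[A_\xi\otimes A_\eta]=\{1\}$. For such $c$, $\mathcal{A}_c=\{a\in[\omega_1]^{<\omega}:c_0[[a]^2]\subseteq\{0\}\}$; a strong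 $T_0$-family is a family of the form $\mathcal{A}_c$ for a strong $T$-coloring $c$. *)

(* Defs.v *)
(* omega_1 is given abstractly as a type with a strict
   well-order that is uncountable and all of whose proper initial
   segments are countable (this characterizes omega_1 up to isomorphism). *)
From Stdlib Require Import List.

Definition countable_set {X : Type} (S : X -> Prop) : Prop :=
  exists f : X -> nat, forall x y, S x -> S y -> f x = f y -> x = y.

Definition uncountable_set {X : Type} (S : X -> Prop) : Prop :=
  ~ countable_set S.

Definition finite_set {X : Type} (A : X -> Prop) : Prop :=
  exists l : list X, forall x, A x <-> In x l.

Definition is_omega1 (W : Type) (lt : W -> W -> Prop) : Prop :=
  (forall x, ~ lt x x) /\
  (forall x y z, lt x y -> lt y z -> lt x z) /\
  (forall x y, lt x y \/ x = y \/ lt y x) /\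
  well_founded lt /\
  uncountable_set (fun _ : W => True) /\
  (forall x, countable_set (fun y => lt y x)).

Definition upair {W : Type} (x y : W) : W -> Prop := fun z => z = x \/ z = y.

(* A coloring of [W]^2 is a function c : W -> W -> K that is symmetric on
   distinct arguments; c x y is the color of {x,y}. *)
Definition sym_coloring {W K : Type} (c : W -> W -> K) : Prop :=
  forall x y, x <> y -> c x y = c y x.

(* T-coloring c = (c0, c1) : [W]^2 -> I x J, with 0 = zero, 1 = one in I *)
Definition T_coloring {W I J : Type} (lt : W -> W -> Prop) (zero one : I)
  (c0 : W -> W -> I) (c1 : W -> W -> J) : Prop :=
  zero <> one /\ inhabited J /\ sym_coloring c0 /\ sym_coloring c1 /\
  forall (a0 a1 : W -> W),
    (forall xi, a0 xi <> a1 xi) ->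
    (forall xi eta, xi <> eta ->
       a0 xi <> a0 eta /\ a0 xi <> a1 eta /\
       a1 xi <> a0 eta /\ a1 xi <> a1 eta) ->
    forall (i0 i1 : I) (j0 j1 : J),
      exists xi eta, lt xi eta /\
        c0 (a0 xi) (a0 eta) = i0 /\ c1 (a0 xi) (a0 eta) = j0 /\
        c0 (a1 xi) (a1 eta) = i1 /\ c1 (a1 xi) (a1 eta) = j1.

Definition disjoint_finite_family {W : Type} (A : W -> (W -> Prop)) : Prop :=
  (forall xi, finite_set (A xi)) /\
  (forall xi, exists x, A xi x) /\
  (forall xi eta, xi <> eta -> forall x, A xi x -> A eta x -> False).

Definition strong_T_coloring {W I J : Type} (lt : W -> W -> Prop) (zero one : I)
  (c0 : W -> W -> I) (c1 : W -> W -> J) : Prop :=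
  T_coloring lt zero one c0 c1 /\
  forall A : W -> (W -> Prop), disjoint_finite_family A ->
    (exists xi eta, lt xi eta /\
       forall x y, A xi x -> A eta y -> c0 x y = zero) /\
    (exists xi eta, lt xi eta /\
       forall x y, A xi x -> A eta y -> c0 x y = one).

Definition A_c {W I : Type} (zero : I) (c0 : W -> W -> I) (a : W -> Prop) : Prop :=
  finite_set a /\ forall x y, a x -> a y -> x <> y -> c0 x y = zero.

Definition strong_T0_family {W : Type} (lt : W -> W -> Prop)
  (Afam : (W -> Prop) -> Prop) : Prop :=
  exists (I J : Type) (zero one : I) (c0 : W -> W -> I) (c1 : W -> W -> J),
    strong_T_coloring lt zero one c0 c1 /\
    forall a, Afam a <-> A_c zero c0 a.

(* Main.v *)
Require Import Defs.
From Stdlib Require Import List Classical ClassicalEpsilon FunctionalExtensionality PropExtensionality.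

Section Enum.
Variable W : Type.
Variable lt : W -> W -> Prop.
Hypothesis Hwf : well_founded lt.
Variable F : (W -> Prop) -> Prop.
Hypothesis HF : uncountable_set F.
Hypothesis Hseg : forall x, countable_set (fun y => lt y x).

Definition stepF (x : W) (rec : forall y, lt y x -> (W -> Prop)) : W -> Prop :=
  epsilon (inhabits (fun _ : W => False))
    (fun A => F A /\ forall y (p : lt y x), rec y p <> A).

Definition G : W -> (W -> Prop) := Fix Hwf (fun _ => W -> Prop) stepF.

Lemma G_eq x : G x = stepF x (fun y _ => G y).
Proof.
  unfold G. refine (Fix_eq Hwf (fun _ => W -> Prop) stepF _ x). intros x0 f g H. unfold stepF. f_equal.
  apply functional_extensionality; intro A. apply propositional_extensionality.
  split; intros [h1 h2]; split; auto; intros y p; [rewrite <- H | rewrite H]; auto.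
Qed.

Lemma G_spec x : F (G x) /\ forall y, lt y x -> G y <> G x.
Proof.
  rewrite G_eq. unfold stepF.
  apply (epsilon_spec (inhabits (fun _ : W => False))
     (fun A => F A /\ forall y (p : lt y x), G y <> A)).
  apply NNPP; intro Hn. apply HF.
  assert (Hall : forall A, F A -> exists y, lt y x /\ G y = A).
  { intros A HA. apply NNPP; intro Hn2. apply Hn. exists A. split; auto.
    intros y p E. apply Hn2. eauto. }
  destruct (Hseg x) as [f Hf].
  exists (fun A => f (epsilon (inhabits x) (fun y => lt y x /\ G y = A))).
  intros A B HA HB Heq.
  pose proof (epsilon_spec (inhabits x) (fun y => lt y x /\ G y = A) (Hall A HA)) as [a1 a2].
  pose proof (epsilon_spec (inhabits x) (fun y => lt y x /\ G y = B) (Hall B HB)) as [b1 b2].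
  pose proof (Hf _ _ a1 b1 Heq) as E. rewrite <- a2, <- b2, E. reflexivity.
Qed.
End Enum.

Theorem lemma2p12 (W : Type) (lt : W -> W -> Prop) (Hw1 : is_omega1 W lt)
  (Afam : (W -> Prop) -> Prop) (HA : strong_T0_family lt Afam)
  (F : (W -> Prop) -> Prop) :
  uncountable_set F ->
  (forall A, F A -> finite_set A) ->
  (forall A B, F A -> F B -> A <> B -> forall x, A x -> B x -> False) ->
  ((exists A B, F A /\ F B /\ A <> B /\
      forall x y, A x -> B y -> ~ Afam (upair x y)) /\
   (exists A B, F A /\ F B /\ A <> B /\
      forall x y, A x -> B y -> Afam (upair x y)) /\
   (forall C : W -> Prop, finite_set C ->
      (forall x y, C x -> C y -> x <> y -> Afam (upair x y)) -> Afam C)).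
Proof.
  intros HF Hfin Hdisj.
  destruct Hw1 as (Hirr & Htr & Htri & Hwf & Hunc & Hseg).
  destruct HA as (I & J & zero & one & c0 & c1 & [[Hz1 [_ [Hsym0 _]]] Hstrong] & HAc).
  assert (P3 : forall C : W -> Prop, finite_set C ->
      (forall x y, C x -> C y -> x <> y -> Afam (upair x y)) -> Afam C).
  { intros C HC H. apply HAc. split; auto. intros x y Cx Cy Nxy.
    destruct (proj1 (HAc _) (H x y Cx Cy Nxy)) as [_ H2].
    apply H2; unfold upair; auto. }
  assert (Hpair : forall x y, x <> y -> c0 x y = zero -> Afam (upair x y)).
  { intros x y Nxy E. apply HAc. split.
    - exists (x :: y :: nil). unfold upair; simpl; intuition.
    - unfold upair; intros u v [-> | ->] [-> | ->] N; try congruence.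
      rewrite Hsym0; auto. }
  split; [|split]; [| | exact P3].
  all: destruct (classic (exists A, F A /\ forall x, ~ A x)) as [[A0 [FA0 E0]] | Hne].
  1,3: assert (exists B, F B /\ B <> A0) as [B [FB NB]];
    [ apply NNPP; intro Hn; apply HF; exists (fun _ => 0); intros A B HA' HB' _;
      transitivity A0; [|symmetry]; apply NNPP; intro; apply Hn; eauto
    | exists A0, B; repeat split; auto; intros x y Hx; exfalso; eapply E0; eauto ].
  all: pose (g := G W lt Hwf F).
  all: assert (Hg : forall x, F (g x) /\ forall y, lt y x -> g y <> g x)
         by (intro; apply (G_spec W lt Hwf F HF Hseg)).
  all: assert (Ginj : forall x y, x <> y -> g x <> g y)
         by (intros x y N; destruct (Htri x y) as [h|[h|h]];
             [intro E; apply (proj2 (Hg y) x h); auto | contradiction |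
              intro E; apply (proj2 (Hg x) y h); auto]).
  all: assert (DF : disjoint_finite_family g).
  all: try (split; [intro; apply Hfin, Hg | split;
     [intro xi; apply NNPP; intro Hn; apply Hne; exists (g xi); split; [apply Hg|];
      intros x Hx; apply Hn; eauto
     | intros xi eta N x Hx Hy; apply (Hdisj (g xi) (g eta)) with x; auto; apply Hg]]).
  all: destruct (Hstrong g DF) as [[xi [eta [Hl H0]]] [xi' [eta' [Hl' H1]]]].
  - exists (g xi'), (g eta'). repeat split; try apply (proj1 (Hg _)).
    + apply Ginj; intro E; subst; eapply Hirr; eauto.
    + intros x y Hx Hy Hp. destruct (proj1 (HAc _) Hp) as [_ H2].
      assert (x <> y).
      { intro E; subst. eapply (Hdisj (g xi') (g eta')); eauto; try apply (proj1 (Hg _)).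
        apply Ginj; intro E; subst; eapply Hirr; eauto. }
      apply Hz1. rewrite <- (H1 x y Hx Hy). symmetry. apply H2; unfold upair; auto.
  - exists (g xi), (g eta). repeat split; try apply (proj1 (Hg _)).
    + apply Ginj; intro E; subst; eapply Hirr; eauto.
    + intros x y Hx Hy. apply Hpair; auto.
      intro E; subst. eapply (Hdisj (g xi) (g eta)); eauto; try apply (proj1 (Hg _)).
      apply Ginj; intro E; subst; eapply Hirr; eauto.
Qed.
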